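(* Assume $L$ satisfies (L1),(L2) and $W$ satisfies (W1)–(W6) (as in the context), and let $\varrho>0$. Then there exists $\rho>\varrho$ such that $\sup_{u\in\partial Q}I(u)\le0$, where $$Q=\{\zeta e_{\bar n+1}:0\le\zeta\le\rho\}\oplus\{u\in E^-\oplus E^0:\|u\|\le\rho\}$$ and $\partial Q$ is the boundary of $Q$ relative to the finite-dimensional space $\operatorname{span}\{e_{\bar n+1}\}\oplus E^-\oplus E^0$, i.e. $\partial Q=\{u\in E^-\oplus E^0:\|u\|\le\rho\}\cup\big(\rho e_{\bar n+1}+\{u\in E^-\oplus E^0:\|u\|\le\rho\}\big)\cup\big(\{\zeta e_{\bar n+1}:0\le\zeta\le\rho\}+\{u\in E^-\oplus E^0:\|u\|=\rho\}\big)$.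
   Context: $L\in C(\mathbb{R},\mathbb{R}^{N\times N})$ symmetric-matrix valued, $W\in C^1(\mathbb{R}\times\mathbb{R}^N,\mathbb{R})$, $\nabla W$ the gradient in $x$, $\widetilde W(t,x)=2W(t,x)-(\nabla W(t,x),x)$, $l(t)=\min_{|x|=1}(L(t)x,x)$. (L1): $\exists\,\alpha>1,M>0$ with $\lim_{R\to\infty}\operatorname{meas}\{t:|t|\ge R,\ l(t)\le M|t|\ln^\alpha|t|\}=0$. (L2): $\exists L_0>0$ with $(L(t)x,x)\ge-L_0|x|^2$. $\mathcal{H}$ is the self-adjoint extension in $L^2(\mathbb{R},\mathbb{R}^N)$ of $-\frac{d^2}{dt^2}+L(t)$, with eigenvalues $\lambda_1\le\lambda_2\le\cdots\to\infty$ and eigenfunctions $e_n$ ($\mathcal{H}e_n=\lambda_ne_n$) forming an orthogonal basis of $L^2$; $\bar n$ is the number of nonpositive eigenvalues. $E=\mathfrak{D}(|\mathcal{H}|^{1/2})$, $E=E^-\oplus E^0\oplus E^+$ (spans of eigenfunctions with negative, zero, positive eigenvalues; $E^-\oplus E^0$ finite dimensional), norm $\|u\|^2=\||\mathcal{H}|^{1/2}u\|_{L^2}^2+\|u^0\|_{L^2}^2$. $I(u)=\frac12\|u^+\|^2-\frac12\|u^-\|^2-\int_{\mathbb{R}}W(t,u(t))\,dt$. (W1) $W(t,0)=0$, $|\nabla W(t,x)|\le b_1|x|$. (W2) $\widetilde W(t,x)\ge b_2|x|^\mu$ for $|x|\ge r_1$, with $b_2,r_1>0,\mu>1$. (W3)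 $\widetilde W(t,x)\ge-b_3|x|$ for $|x|<r_1$, $b_3>0$. (W4) $|W(t,x)|\le\frac{\lambda_{\bar n+1}-\sigma_0}{2}|x|^2$ for $|x|\le r_2$, $r_2,\sigma_0>0$. (W5) $W(t,x)\ge(\frac{\lambda_{\bar n+1}}2+\varepsilon_0)|x|^2$ for $|x|\ge r_\infty$, $\varepsilon_0,r_\infty>0$. (W6) $W\ge0$. All for all $t\in\mathbb{R}$. *)

(* Defs.v *)
From HB Require Import structures.
From mathcomp Require Import all_boot all_order all_algebra.
From mathcomp Require Import all_classical all_reals all_analysis.
Set Implicit Arguments. Unset Strict Implicit. Unset Printing Implicit Defensive.
Import Order.TTheory GRing.Theory Num.Theory.
Import numFieldNormedType.Exports.
Local Open Scope classical_set_scope.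
Local Open Scope ring_scope.

Section Defs.
Variables (R : realType) (N : nat).
Local Notation mu := (@lebesgue_measure R).

Definition dotv (x y : 'rV[R]_N) : R := \sum_(i < N) x 0 i * y 0 i.
Definition vnorm (x : 'rV[R]_N) : R := Num.sqrt (dotv x x).

Definition quadf (A : 'M[R]_N) (x : 'rV[R]_N) : R := (x *m A *m x^T) 0 0.

Definition lmin (L : R -> 'M[R]_N) (t : R) : R :=
  inf [set q | exists x, vnorm x = 1 /\ q = quadf (L t) x].

Definition L2sq (u : R -> 'rV[R]_N) : \bar R :=
  (\int[mu]_t ((vnorm (u t)) ^+ 2)%:E)%E.
Definition isL2 (u : R -> 'rV[R]_N) : Prop :=
  (forall i : 'I_N, measurable_fun setT (fun t => u t 0 i)) /\ (L2sq u < +oo)%E.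
Definition ipL2 (u v : R -> 'rV[R]_N) : R :=
  Rintegral mu setT (fun t => dotv (u t) (v t)).

(* Spectral data of the self-adjoint operator H = -d^2/dt^2 + L(t):
   e is a complete orthonormal family in L^2 of (classical) eigenfunctions,
   H e_n = lambda_n e_n, with lambda nondecreasing and tending to +oo. *)
Definition eigen_basis (L : R -> 'M[R]_N) (lam : nat -> R)
    (e : nat -> R -> 'rV[R]_N) : Prop :=
  [/\ (forall n, isL2 (e n)) /\
      (forall m n, ipL2 (e m) (e n) = (m == n)%:R),
      (forall u, isL2 u ->
         (fun k => \sum_(n < k) (ipL2 u (e n)) ^+ 2) @ \oo --> fine (L2sq u)),
      (forall n t (i : 'I_N),
         derivable (fun s => e n s 0 i) t 1 /\
         derivable (derive1 (fun s => e n s 0 i)) t 1 /\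
         - derive1 (derive1 (fun s => e n s 0 i)) t + (e n t *m L t) 0 i
           = lam n * e n t 0 i),
      {homo lam : m n / (m <= n)%N >-> m <= n} &
      lam @ \oo --> +oo].

(* The norm of E = D(|H|^{1/2}):
   ||u||^2 = || |H|^{1/2} u ||_{L^2}^2 + ||u^0||_{L^2}^2
           = sum_n (|lambda_n| + [lambda_n = 0]) <u, e_n>^2 *)
Definition Enorm (lam : nat -> R) (e : nat -> R -> 'rV[R]_N)
    (u : R -> 'rV[R]_N) : R :=
  Num.sqrt (limn (fun k => \sum_(n < k)
     (`|lam n| + (lam n == 0)%:R) * (ipL2 u (e n)) ^+ 2)).

(* The functional I(u) = 1/2 ||u^+||^2 - 1/2 ||u^-||^2 - int W(t, u(t)) dt,
   with ||u^+||^2 = sum_{lambda_n > 0} lambda_n <u,e_n>^2 and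
        ||u^-||^2 = sum_{lambda_n < 0} |lambda_n| <u,e_n>^2. *)
Definition Ifun (lam : nat -> R) (e : nat -> R -> 'rV[R]_N)
    (W : R -> 'rV[R]_N -> R) (u : R -> 'rV[R]_N) : R :=
  2^-1 * limn (fun k => \sum_(n < k | 0 < lam n) lam n * (ipL2 u (e n)) ^+ 2)
  - 2^-1 * limn (fun k => \sum_(n < k | lam n < 0) `|lam n| * (ipL2 u (e n)) ^+ 2)
  - Rintegral mu setT (fun t => W t (u t)).

(* E^- (+) E^0 = span{e_0, ..., e_{nbar-1}} (0-based indexing) *)
Definition lincomb (nbar : nat) (e : nat -> R -> 'rV[R]_N) (c : 'I_nbar -> R)
  : R -> 'rV[R]_N := fun t => \sum_(k < nbar) c k *: e k t.

Definition Ball_negzero (lam : nat -> R) (e : nat -> R -> 'rV[R]_N) (nbar : nat) (rho : R) : set (R -> 'rV[R]_N) :=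
  [set u | exists c : 'I_nbar -> R, u = lincomb e c /\ Enorm lam e u <= rho].
Definition Sphere_negzero (lam : nat -> R) (e : nat -> R -> 'rV[R]_N) (nbar : nat) (rho : R) : set (R -> 'rV[R]_N) :=
  [set u | exists c : 'I_nbar -> R, u = lincomb e c /\ Enorm lam e u = rho].

Definition boundaryQ (lam : nat -> R) (e : nat -> R -> 'rV[R]_N) (nbar : nat) (rho : R) : set (R -> 'rV[R]_N) :=
  Ball_negzero lam e nbar rho
  `|` [set u | exists v, Ball_negzero lam e nbar rho v /\
               u = (fun t => rho *: e nbar t + v t)]
  `|` [set u | exists zeta v, 0 <= zeta <= rho /\ Sphere_negzero lam e nbar rho v /\
               u = (fun t => zeta *: e nbar t + v t)].

End Defs.

(* Main.v *)
Require Import Defs.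
From HB Require Import structures.
From mathcomp Require Import all_boot all_order all_algebra.
From mathcomp Require Import all_classical all_reals all_analysis.
From mathcomp Require Import ring lra measurable_realfun.
Import Order.TTheory GRing.Theory Num.Theory.
Import numFieldNormedType.Exports.
Local Open Scope classical_set_scope.
Local Open Scope ring_scope.
Set Implicit Arguments. Unset Strict Implicit. Unset Printing Implicit Defensive.
Section Alg.
Variables (R : realType) (N : nat).
Implicit Types x y z : 'rV[R]_N.

Lemma dotvC x y : dotv x y = dotv y x.
Proof. by rewrite /dotv; apply: eq_bigr => i _; rewrite mulrC. Qed.

Lemma dotvDl x y z : dotv (x + y) z = dotv x z + dotv y z.
Proof. by rewrite /dotv -big_split; apply: eq_bigr => i _; rewrite mxE mulrDl. Qed.

Lemma dotvZl (a : R) x y : dotv (a *: x) y = a * dotv x y.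
Proof. by rewrite /dotv mulr_sumr; apply: eq_bigr => i _; rewrite mxE mulrA. Qed.

Lemma dotv0l y : dotv 0 y = 0.
Proof. by rewrite /dotv big1 // => i _; rewrite mxE mul0r. Qed.

Lemma dotv_suml m (F : nat -> 'rV[R]_N) y :
  dotv (\sum_(k < m) F k) y = \sum_(k < m) dotv (F k) y.
Proof.
elim: m => [|m IH]; first by rewrite !big_ord0 dotv0l.
by rewrite !big_ord_recr /= dotvDl IH.
Qed.

Lemma dotv_ge0 x : 0 <= dotv x x.
Proof. by apply: sumr_ge0 => i _; rewrite -expr2 sqr_ge0. Qed.

Lemma vnorm_sq x : vnorm x ^+ 2 = dotv x x.
Proof. by rewrite /vnorm sqr_sqrtr // dotv_ge0. Qed.

Lemma dotv_le (k : R) x y : 2 * k * dotv x y <= dotv x x + k ^+ 2 * dotv y y.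
Proof.
have := dotv_ge0 (x - k *: y).
rewrite dotvDl !(dotvC _ (x + _)) !dotvDl.
rewrite -!scaleNr !dotvZl !(dotvC _ (- k *: y)) !dotvZl !(dotvC y x); nra.
Qed.

Lemma CS_sum m (a b : nat -> R) :
  (\sum_(k < m) a k * b k) ^+ 2 <= (\sum_(k < m) a k ^+ 2) * (\sum_(k < m) b k ^+ 2).
Proof.
have H : 0 <= \sum_(j < m) \sum_(k < m) (a j * b k - a k * b j) ^+ 2.
  by apply: sumr_ge0 => j _; apply: sumr_ge0 => k _; apply: sqr_ge0.
have E : \sum_(j < m) \sum_(k < m) (a j * b k - a k * b j) ^+ 2 =
   2 * ((\sum_(k < m) a k ^+ 2) * (\sum_(k < m) b k ^+ 2)) -
   2 * (\sum_(k < m) a k * b k) ^+ 2.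
  have E1 : \sum_(j < m) \sum_(k < m) (a j * b k - a k * b j) ^+ 2 =
    \sum_(j < m) \sum_(k < m) (a j ^+ 2 * b k ^+ 2) +
    \sum_(j < m) \sum_(k < m) (a k ^+ 2 * b j ^+ 2) -
    2 * \sum_(j < m) \sum_(k < m) (a j * b j) * (a k * b k).
    rewrite mulr_sumr -!big_split /= -sumrN -big_split /=.
    apply: eq_bigr => j _; rewrite mulr_sumr -!big_split -sumrN -big_split /=.
    by apply: eq_bigr => k _; ring.
  have S1 : \sum_(j < m) \sum_(k < m) (a j ^+ 2 * b k ^+ 2) =
      (\sum_(k < m) a k ^+ 2) * (\sum_(k < m) b k ^+ 2).
    by rewrite mulr_suml; apply: eq_bigr => j _; rewrite mulr_sumr.
  have S2 : \sum_(j < m) \sum_(k < m) (a k ^+ 2 * b j ^+ 2) =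
      (\sum_(k < m) a k ^+ 2) * (\sum_(k < m) b k ^+ 2).
    by rewrite exchange_big /= S1.
  have S3 : \sum_(j < m) \sum_(k < m) (a j * b j) * (a k * b k) =
      (\sum_(k < m) a k * b k) ^+ 2.
    by rewrite expr2 mulr_suml; apply: eq_bigr => j _; rewrite mulr_sumr.
  rewrite E1 S1 S2 S3; ring.
lra.
Qed.

End Alg.

Section Alg2.
Variables (R : realType) (N : nat).

Lemma dotvDr (x y z : 'rV[R]_N) : dotv x (y + z) = dotv x y + dotv x z.
Proof. by rewrite dotvC dotvDl !(dotvC x). Qed.

Lemma dotvZr (a : R) (x y : 'rV[R]_N) : dotv x (a *: y) = a * dotv x y.
Proof. by rewrite dotvC dotvZl dotvC. Qed.

Lemma dotv_sumr m (F : nat -> 'rV[R]_N) y :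
  dotv y (\sum_(k < m) F k) = \sum_(k < m) dotv y (F k).
Proof. by rewrite dotvC dotv_suml; apply: eq_bigr => k _; rewrite dotvC. Qed.

Lemma comb_coord m (d : nat -> R) (x : nat -> 'rV[R]_N) (i : 'I_N) :
  (\sum_(k < m) d k *: x k) 0 i = \sum_(k < m) d k * x k 0 i.
Proof. by rewrite summxE; apply: eq_bigr => k _; rewrite mxE. Qed.

Lemma dotv_comb_le m (d : nat -> R) (x : nat -> 'rV[R]_N) :
  dotv (\sum_(k < m) d k *: x k) (\sum_(k < m) d k *: x k) <=
  (\sum_(k < m) d k ^+ 2) * \sum_(k < m) dotv (x k) (x k).
Proof.
rewrite {1}/dotv.
under eq_bigr do rewrite comb_coord -expr2.
apply: (@le_trans _ _ (\sum_(i < N) ((\sum_(k < m) d k ^+ 2) *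
                        \sum_(k < m) x k 0 i ^+ 2))).
  by apply: ler_sum => i _; exact: (CS_sum m d (fun k => x k 0 i)).
rewrite -mulr_sumr; apply: ler_wpM2l; first by apply: sumr_ge0 => k _; apply: sqr_ge0.
rewrite exchange_big /=; apply: ler_sum => k _.
by rewrite /dotv le_eqVlt; apply/orP; left; apply/eqP; apply: eq_bigr => i _; rewrite expr2.
Qed.

End Alg2.

Section Cont.
Variables (R : realType) (N : nat).

Lemma cont_sum m (F : nat -> R -> R) :
  (forall k, continuous (F k)) -> continuous (fun t => \sum_(k < m) F k t).
Proof.
move=> HF.
have -> : (fun t => \sum_(k < m) F k t) = \sum_(k < m) F k by rewrite fct_sumE.
apply: (big_ind (fun g : R -> R => continuous g)) => //.
- exact: (@cst_continuous _ _ (0:R)).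
- by move=> f g cf cg t; exact: (continuousD (cf t) (cg t)).
Qed.

Lemma cont_dotv (f g : R -> 'rV[R]_N) :
  (forall i, continuous (fun t => f t 0 i)) ->
  (forall i, continuous (fun t => g t 0 i)) ->
  continuous (fun t => dotv (f t) (g t)).
Proof.
move=> cf cg; rewrite /dotv.
have -> : (fun t => \sum_(i < N) f t 0 i * g t 0 i) = \sum_(i < N) (fun t => f t 0 i * g t 0 i).
  by rewrite fct_sumE.
apply: (big_ind (fun g : R -> R => continuous g)) => //.
- exact: (@cst_continuous _ _ (0:R)).
- by move=> f1 g1 cf1 cg1 t; exact: (continuousD (cf1 t) (cg1 t)).
- by move=> i _ t; exact: (continuousM (cf i t) (cg i t)).
Qed.

Lemma der_cont (f : R -> R) : (forall t, derivable f t 1) -> continuous f.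
Proof.
by move=> H t; apply: differentiable_continuous; apply/derivable1_diffP.
Qed.

End Cont.

Section Integ.
Variables (R : realType).
Local Notation mu := (@lebesgue_measure R).

Lemma int_sum m (F : nat -> R -> R) :
  (forall k, mu.-integrable setT (EFin \o F k)) ->
  mu.-integrable setT (EFin \o (fun t => \sum_(k < m) F k t)) /\
  Rintegral mu setT (fun t => \sum_(k < m) F k t) =
  \sum_(k < m) Rintegral mu setT (F k).
Proof.
move=> HF; elim: m => [|m [IHi IHe]].
  split.
    apply: (eq_integrable _ (cst 0%E)) => //; last exact: integrable0.
    by move=> t _; rewrite /= big_ord0.
  rewrite big_ord0 (_ : (fun t => _) = (fun _ => 0)); last first.
    by apply: funext => t; rewrite big_ord0.
  by rewrite /Rintegral integral0.
have E : (fun t => \sum_(k < m.+1) F k t) = (fun t => \sum_(k < m) F k t + F m t).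
  by apply: funext => t; rewrite big_ord_recr.
rewrite E big_ord_recr /=; split.
  have H := integrableD measurableT IHi (HF m).
  by apply: (eq_integrable measurableT _ _ _ H) => t _ /=; rewrite EFinD.
by rewrite RintegralD // IHe.
Qed.

Lemma int_scale (c : R) (f : R -> R) :
  mu.-integrable setT (EFin \o f) ->
  mu.-integrable setT (EFin \o (fun t => c * f t)).
Proof.
move=> Hf; have H := integrableZl measurableT c Hf.
by apply: (eq_integrable measurableT _ _ _ H) => t _ /=; rewrite EFinM.
Qed.

End Integ.

Section Eig.
Variables (R : realType) (N : nat) (e : nat -> R -> 'rV[R]_N).
Local Notation mu := (@lebesgue_measure R).
Hypothesis He_der : forall n t (i : 'I_N), derivable (fun s => e n s 0 i) t 1.
Hypothesis He_orth : forall m n, ipL2 (e m) (e n) = (m == n)%:R.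

Definition comb (d : nat -> R) m : R -> 'rV[R]_N := fun t => \sum_(k < m) d k *: e k t.

Lemma e_cont n i : continuous (fun t => e n t 0 i).
Proof. by apply: der_cont => t; apply: He_der. Qed.

Lemma comb_cont d m i : continuous (fun t => comb d m t 0 i).
Proof.
have -> : (fun t => comb d m t 0 i) = (fun t => \sum_(k < m) d k * e k t 0 i).
  by apply: funext => t; rewrite /comb (comb_coord m d (fun k => e k t)).
apply: (@cont_sum _ m (fun k t => d k * e k t 0 i)) => k t.
apply: continuousM; [exact: cvg_cst | exact: e_cont].
Qed.

Lemma meas_cont (f : R -> R) : continuous f -> measurable_fun setT f.
Proof. exact: measurable_realfun.continuous_measurable_fun. Qed.

Lemma int_ee_diag n : mu.-integrable setT (EFin \o (fun t => dotv (e n t) (e n t))).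
Proof.
have mf : measurable_fun setT (fun t => dotv (e n t) (e n t)).
  by apply: meas_cont; apply: cont_dotv => i; apply: e_cont.
apply/integrableP; split; first exact/measurable_realfun.measurable_EFinP.
have H1 := He_orth n n; rewrite eqxx /ipL2 /Rintegral in H1.
have -> : (\int[mu]_(x in setT) `|(EFin \o (fun t => dotv (e n t) (e n t))) x|)%E =
          (\int[mu]_(x in setT) ((dotv (e n x) (e n x))%:E))%E.
  by apply: eq_integral => t _ /=; rewrite ger0_norm // dotv_ge0.
rewrite ltey; apply/eqP => Hinf; rewrite Hinf /= in H1.
by move/eqP: H1; rewrite eq_sym oner_eq0.
Qed.

Lemma abs_dotv_le (x y : 'rV[R]_N) : `|dotv x y| <= dotv x x + dotv y y.
Proof.
have h1 := dotv_le 1 x y; have h2 := dotv_le (-1) x y.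
have := dotv_ge0 x; have := dotv_ge0 y.
rewrite expr1n in h1; rewrite sqrrN expr1n in h2.
by move=> ? ?; rewrite ler_norml; apply/andP; split; lra.
Qed.

Lemma int_dotv (f g : R -> 'rV[R]_N) :
  (forall i, continuous (fun t => f t 0 i)) ->
  (forall i, continuous (fun t => g t 0 i)) ->
  mu.-integrable setT (EFin \o (fun t => dotv (f t) (f t))) ->
  mu.-integrable setT (EFin \o (fun t => dotv (g t) (g t))) ->
  mu.-integrable setT (EFin \o (fun t => dotv (f t) (g t))).
Proof.
move=> cf cg If Ig.
have Is := integrableD measurableT If Ig.
apply: (le_integrable measurableT _ _ Is).
  by apply/measurable_realfun.measurable_EFinP; apply: meas_cont; apply: cont_dotv.
move=> t _ /=; rewrite !lee_fin (ger0_norm (addr_ge0 (dotv_ge0 _) (dotv_ge0 _))).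
exact: abs_dotv_le.
Qed.

Lemma int_ee m n : mu.-integrable setT (EFin \o (fun t => dotv (e m t) (e n t))).
Proof. by apply: int_dotv => [i|i||]; rewrite ?int_ee_diag //; apply: e_cont. Qed.

End Eig.

Section Comb.
Variables (R : realType) (N : nat) (e : nat -> R -> 'rV[R]_N).
Local Notation mu := (@lebesgue_measure R).
Hypothesis He_der : forall n t (i : 'I_N), derivable (fun s => e n s 0 i) t 1.
Hypothesis He_orth : forall m n, ipL2 (e m) (e n) = (m == n)%:R.

Lemma sum_delta m (d : nat -> R) (n : nat) :
  \sum_(k < m) d k * ((k : nat) == n)%:R = if (n < m)%N then d n else 0.
Proof.
case: ltnP => Hn.
  rewrite (bigD1 (Ordinal Hn)) // big1.
    by rewrite (_ : (_ == _) = true) /=; [rewrite mulr1 addr0 | exact: eqxx].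
  move=> k Hk; case: eqP => [Hkn|_]; last by rewrite mulr0.
  by move: Hk; rewrite andTb => /eqP []; apply: val_inj.
rewrite big1 // => k _.
case: eqP => [Hkn|_]; last by rewrite mulr0.
by have := ltn_ord k; rewrite Hkn ltnNge Hn.
Qed.

Lemma ip_comb d m n :
  mu.-integrable setT (EFin \o (fun t => dotv (comb e d m t) (e n t))) /\
  ipL2 (comb e d m) (e n) = if (n < m)%N then d n else 0.
Proof.
have E : (fun t => dotv (comb e d m t) (e n t)) =
         (fun t => \sum_(k < m) d k * dotv (e k t) (e n t)).
  by apply: funext => t; rewrite /comb (dotv_suml m (fun k => d k *: e k t)); apply: eq_bigr => k _; rewrite dotvZl.
have HF : forall k, mu.-integrable setT (EFin \o (fun t => d k * dotv (e k t) (e n t))).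
  by move=> k; apply: int_scale; apply: int_ee.
have [I1 I2] := int_sum m HF.
rewrite /ipL2 E; split => //; rewrite I2 -sum_delta.
apply: eq_bigr => k _; rewrite RintegralZl //; last exact: int_ee.
by rewrite -He_orth.
Qed.

Lemma comb_coord_cont d m i : continuous (fun t => comb e d m t 0 i).
Proof. exact: comb_cont. Qed.

Lemma norm_comb d m :
  mu.-integrable setT (EFin \o (fun t => dotv (comb e d m t) (comb e d m t))) /\
  Rintegral mu setT (fun t => dotv (comb e d m t) (comb e d m t)) = \sum_(k < m) d k ^+ 2.
Proof.
have E : (fun t => dotv (comb e d m t) (comb e d m t)) =
         (fun t => \sum_(k < m) d k * dotv (comb e d m t) (e k t)).
  apply: funext => t; rewrite {2}/comb (dotv_sumr m (fun k => d k *: e k t)); apply: eq_bigr => k _.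
  by rewrite dotvZr.
have HF : forall k, mu.-integrable setT (EFin \o (fun t => d k * dotv (comb e d m t) (e k t))).
  by move=> k; apply: int_scale; have [] := ip_comb d m k.
have [I1 I2] := int_sum m HF.
rewrite E; split => //; rewrite I2.
apply: eq_bigr => k _; rewrite RintegralZl //; last by have [] := ip_comb d m k.
by have [_ E2] := ip_comb d m k; rewrite /ipL2 in E2; rewrite E2 ltn_ord expr2.
Qed.

End Comb.

Section WBound.
Variables (R : realType) (N : nat) (W : R -> 'rV[R]_N -> R) (gradW : R -> 'rV[R]_N -> 'rV[R]_N) (b1 : R).
Hypothesis HWd : forall t x v, is_derive x v (W t) (dotv (gradW t x) v).
Hypothesis Hb1 : 0 < b1.
Hypothesis HW1 : forall t x, W t 0 = 0 /\ vnorm (gradW t x) <= b1 * vnorm x.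

Lemma W_upper t x : W t x <= b1 * dotv x x.
Proof.
pose g := fun s : R => W t (s *: x).
have Hd : forall s : R, is_derive s 1 g (dotv (gradW t (s *: x)) x).
  move=> s; have [Hder Hval] := HWd t (s *: x) x.
  have Ef : (fun h : R => h^-1 *: ((g \o shift s) (h *: 1) - g s)) =
            (fun h : R => h^-1 *: ((W t \o shift (s *: x)) (h *: x) - W t (s *: x))).
    by apply: funext => h; rewrite /g /= (_ : h%:A = h) ?scalerDl //; exact: mulr1.
  by split; rewrite /derivable /derive Ef.
have Hc : {within `[0, 1], continuous g}.
  by apply: derivable_within_continuous => s _; have [] := Hd s.
have [c Hcin Hm] := MVT ltr01 (fun s _ => Hd s) Hc.
move: Hcin; rewrite in_itv /= => /andP[c0 c1].
move: Hm; rewrite /g scale1r scale0r (HW1 t x).1 subr0 subr0 mulr1 => ->.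
set y := gradW t (c *: x).
have Hy : vnorm y <= b1 * vnorm (c *: x) by apply: (HW1 t _).2.
have Hcx : dotv (c *: x) (c *: x) <= dotv x x.
  rewrite dotvZl dotvZr mulrA; have hX := dotv_ge0 x.
  have hc2 : c * c <= 1 by nra.
  have : 0 <= (1 - c * c) * dotv x x by apply: mulr_ge0 => //; lra.
  lra.
have Hyy : dotv y y <= b1 ^+ 2 * dotv x x.
  rewrite -!vnorm_sq in Hcx *.
  have := sqrtr_ge0 (dotv y y); have := sqrtr_ge0 (dotv (c *: x) (c *: x)).
  rewrite /vnorm in Hy Hcx * => h1 h2; nra.
have h2 := dotv_le b1 y x.
rewrite -(ler_pM2l Hb1); move: h2 Hyy; rewrite expr2.
set A := dotv y x; set B := dotv y y; set X := dotv x x => h2 h3.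
have : 2 * (b1 * A) <= 2 * (b1 * (b1 * X)) by rewrite !mulrA; lra.
lra.
Qed.

End WBound.

Section DCT.
Variables (R : realType).
Local Notation mu := (@lebesgue_measure R).

Lemma small_min (S : R -> R) (eta : R) :
  continuous S -> (forall t, 0 <= S t) -> mu.-integrable setT (EFin \o S) -> 0 < eta ->
  exists delta, 0 < delta /\
    mu.-integrable setT (EFin \o (fun t => Num.min (S t) delta)) /\
    Rintegral mu setT (fun t => Num.min (S t) delta) <= eta.
Proof.
move=> cS S0 IS eta0.
have mS := meas_cont cS.
have mmin : forall c : R, measurable_fun setT (fun t => Num.min (S t) c).
  by move=> c; apply: (measurable_realfun.measurable_minr mS); exact: measurable_cst.
have Imin : forall c : R, 0 < c -> mu.-integrable setT (EFin \o (fun t => Num.min (S t) c)).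
  move=> c c0; apply: (le_integrable measurableT _ _ IS).
    by apply/measurable_realfun.measurable_EFinP; exact: mmin.
  move=> t _ /=; rewrite !lee_fin ger0_norm; last by rewrite le_min S0 ltW.
  by rewrite ger0_norm ?S0 // ge_min lexx.
pose f_ := fun (n : nat) t => (Num.min (S t) (harmonic n))%:E.
have mf : forall n, measurable_fun setT (fun t : R => f_ n t).
  by move=> n; apply/measurable_realfun.measurable_EFinP; exact: mmin.
have ff : forall t, setT t -> f_ ^~ t @ \oo --> (fun _ : R => 0%:E) t.
  move=> t _; apply/fine_cvgP; split; first exact: nearW.
  apply: (@squeeze_cvgr _ _ _ _ (fun _ => 0) (fun n => harmonic n)).
  - apply: nearW => n /=; rewrite le_min S0 harmonic_ge0 /=.
    by rewrite ge_min lexx orbT.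
  - exact: cvg_cst.
  - exact: cvg_harmonic.
have absfg : forall n t, setT t -> (`|f_ n t| <= (EFin \o S) t)%E.
  move=> n t _ /=; rewrite lee_fin ger0_norm; last by rewrite le_min S0 harmonic_ge0.
  by rewrite ge_min lexx.
have fing : forall t, setT t -> (EFin \o S) t \is a fin_num by [].
have := @dominated_cvg _ _ R mu setT measurableT f_ (fun _ => 0%:E) (EFin \o S) mf ff fing IS absfg.
rewrite integral0 => /fine_cvg /(cvgr_lt _) /(_ _ eta0) [n0 _ Hn0].
exists (harmonic n0); split; first exact: harmonic_gt0.
split; first exact: Imin (harmonic_gt0 n0).
by apply: ltW; apply: (Hn0 n0) => /=.
Qed.

End DCT.

Section Key.
Variables (R : realType) (N : nat) (e : nat -> R -> 'rV[R]_N).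
Variables (W : R -> 'rV[R]_N -> R) (gradW : R -> 'rV[R]_N -> 'rV[R]_N).
Variables (b1 lamb eps0 rinf : R) (m : nat).
Local Notation mu := (@lebesgue_measure R).
Hypothesis He_der : forall n t (i : 'I_N), derivable (fun s => e n s 0 i) t 1.
Hypothesis He_orth : forall m n, ipL2 (e m) (e n) = (m == n)%:R.
Hypothesis HWc : continuous (fun p : R * 'rV[R]_N => W p.1 p.2).
Hypothesis HWd : forall t x v, is_derive x v (W t) (dotv (gradW t x) v).
Hypothesis Hb1 : 0 < b1.
Hypothesis HW1 : forall t x, W t 0 = 0 /\ vnorm (gradW t x) <= b1 * vnorm x.
Hypothesis HW6 : forall t x, 0 <= W t x.
Hypothesis Hlamb : 0 < lamb.
Hypothesis Heps : 0 < eps0.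
Hypothesis Hrinf : 0 < rinf.
Hypothesis HW5 : forall t x, rinf <= vnorm x -> W t x >= (lamb / 2 + eps0) * vnorm x ^+ 2.

Lemma comb_derivable d t : derivable (comb e d m) t 1.
Proof.
apply/derivable_mxP => i j; rewrite (ord1 i).
have -> : (fun x => comb e d m x 0 j) = \sum_(k < m) (fun x => d k * e k x 0 j).
  by rewrite fct_sumE; apply: funext => x; rewrite /comb (comb_coord m d (fun k => e k x)).
apply: derivable_sum => k.
have -> : (fun x : R => d k * e k x 0 j) = d k \*: (fun s => e k s 0 j) by [].
exact: derivableZ.
Qed.

Lemma Wu_cont d : continuous (fun t => W t (comb e d m t)).
Proof.
move=> t0.
have cu : {for t0, continuous (comb e d m)}.
  by apply: differentiable_continuous; apply/derivable1_diffP; exact: comb_derivable.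
have Hp : {for t0, continuous (fun t => (t, comb e d m t))}.
  exact: (cvg_pair (f := fun t => t) (g := comb e d m) cvg_id cu).
by have := continuous_comp Hp (@HWc (t0, comb e d m t0)).
Qed.

Definition Sfun t := \sum_(k < m) dotv (e k t) (e k t).

Lemma S_cont : continuous Sfun.
Proof.
by apply: (@cont_sum _ m (fun k t => dotv (e k t) (e k t))) => k; apply: cont_dotv => i; apply: e_cont.
Qed.

Lemma S_int : mu.-integrable setT (EFin \o Sfun).
Proof.
by have [] := @int_sum _ m (fun k t => dotv (e k t) (e k t)) (fun k => int_ee He_der He_orth k k).
Qed.

Lemma S_ge0 t : 0 <= Sfun t.
Proof. by apply: sumr_ge0 => k _; apply: dotv_ge0. Qed.

Lemma min_int c : 0 < c -> mu.-integrable setT (EFin \o (fun t => Num.min (Sfun t) c)).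
Proof.
move=> c0; apply: (le_integrable measurableT _ _ S_int).
  apply/measurable_EFinP; apply: measurable_minr; first exact: meas_cont S_cont.
  exact: measurable_cst.
move=> t _ /=; rewrite !lee_fin ger0_norm; last by rewrite le_min S_ge0 ltW.
by rewrite ger0_norm ?S_ge0 // ge_min lexx.
Qed.

Lemma Wu_int d : mu.-integrable setT (EFin \o (fun t => W t (comb e d m t))).
Proof.
have [I1 _] := norm_comb He_der He_orth d m.
have I2 := int_scale b1 I1.
apply: (le_integrable measurableT _ _ I2).
  by apply/measurable_EFinP; apply: meas_cont; exact: Wu_cont.
move=> t _ /=; rewrite !lee_fin ger0_norm ?HW6 // ger0_norm.
  exact: W_upper HWd Hb1 HW1 _ _.
by apply: mulr_ge0; [exact: ltW | exact: dotv_ge0].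
Qed.

Lemma key_exists : exists K, 0 < K /\ forall d : nat -> R, K <= \sum_(k < m) d k ^+ 2 ->
  lamb / 2 * \sum_(k < m) d k ^+ 2 <= Rintegral mu setT (fun t => W t (comb e d m t)).
Proof.
have hl := Hlamb; have he := Heps; have hr := Hrinf.
set a := lamb / 2 + eps0.
have a0 : 0 < a by rewrite /a; lra.
have eta0 : 0 < eps0 / a by apply: divr_gt0.
have [delta [delta0 [Idel Hdel]]] := small_min S_cont S_ge0 S_int eta0.
exists (rinf ^+ 2 / delta); split; first by apply: divr_gt0 => //; apply: exprn_gt0.
move=> d HD.
set D := \sum_(k < m) d k ^+ 2 in HD *.
have D0 : 0 < D by apply: lt_le_trans HD; apply: divr_gt0 => //; apply: exprn_gt0.
set c := rinf ^+ 2 / D.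
have c0 : 0 < c by apply: divr_gt0 => //; apply: exprn_gt0.
have cdel : c <= delta.
  rewrite /c ler_pdivrMr // mulrC -ler_pdivrMr //.
set u := comb e d m.
have [Iuu Ruu] := norm_comb He_der He_orth d m.
have Hpt : forall t, a * dotv (u t) (u t) - a * D * Num.min (Sfun t) c <= W t (u t).
  move=> t.
  have HX := dotv_comb_le m d (fun k => e k t).
  rewrite -/(comb e d m t) -/u -/D -/(Sfun t) in HX.
  have Hmin0 : 0 <= Num.min (Sfun t) c by rewrite le_min S_ge0 ltW.
  have [Hr|Hr] := leP rinf (vnorm (u t)).
    have := HW5 t Hr; rewrite -/a vnorm_sq => HW.
    have : 0 <= a * D * Num.min (Sfun t) c by apply: mulr_ge0 => //; apply: mulr_ge0; lra.
    lra.
  have Hv : dotv (u t) (u t) < rinf ^+ 2.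
    rewrite -vnorm_sq ltr_pXn2r // ?nnegrE ?sqrtr_ge0 //; exact: ltW.
  have HW := HW6 t (u t).
  suff : dotv (u t) (u t) <= D * Num.min (Sfun t) c.
    move=> h; have : a * dotv (u t) (u t) <= a * (D * Num.min (Sfun t) c).
      by apply: ler_wpM2l => //; lra.
    rewrite mulrA; lra.
  have [Hs|Hs] := leP (Sfun t) c; first exact: HX.
  by rewrite /c mulrC divfK ?gt_eqF //; apply: ltW.
have Ig : mu.-integrable setT (EFin \o (fun t => a * dotv (u t) (u t) - a * D * Num.min (Sfun t) c)).
  have H1 := int_scale a Iuu.
  have H2 := int_scale (- (a * D)) (min_int c0).
  have H3 := integrableD measurableT H1 H2.
  by apply: (eq_integrable measurableT _ _ _ H3) => t _ /=; rewrite -EFinD mulNr.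
have Hle := le_Rintegral measurableT Ig (Wu_int d) (fun t _ => Hpt t).
apply: le_trans Hle.
rewrite RintegralB //; last 2 first.
  - exact: int_scale.
  - exact: int_scale (min_int c0).
rewrite RintegralZl // Ruu RintegralZl //; last exact: min_int.
have Hmc : Rintegral mu setT (fun t => Num.min (Sfun t) c) <= eps0 / a.
  apply: le_trans Hdel; apply: le_Rintegral => //; first exact: min_int.
  move=> t _; rewrite le_min ge_min lexx /= ge_min.
  by rewrite cdel orbT.
have HJ : forall J, J <= eps0 / a -> lamb / 2 * D <= a * D - a * D * J.
  move=> J HJ.
  have : a * D * J <= a * D * (eps0 / a).
    by apply: ler_wpM2l => //; apply: mulr_ge0; lra.
  have -> : a * D * (eps0 / a) = D * eps0 by field; lra.
  rewrite /a; lra.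
exact: HJ.
Qed.

End Key.

Section Misc.
Variables (R : realType).

Lemma lim_evc (f : nat -> R) c K0 : (forall k, (K0 <= k)%N -> f k = c) -> limn f = c.
Proof.
move=> H; apply: cvg_lim => //; apply: cvg_near_cst; exists K0 => // k /= Hk; exact: H.
Qed.

Lemma sum_trunc (F : nat -> R) (P : pred nat) m0 k :
  (forall n, (m0 <= n)%N -> F n = 0) -> (m0 <= k)%N ->
  \sum_(n < k | P n) F n = \sum_(n < m0 | P n) F n.
Proof.
move=> HF Hk; rewrite (big_ord_widen_cond _ _ _ Hk) big_mkcond [RHS]big_mkcond /=.
apply: eq_bigr => i _; case: (P i) => //=; case: ltnP => // Hi.
by rewrite HF.
Qed.

End Misc.

Section Asm.
Variables (R : realType) (N : nat) (e : nat -> R -> 'rV[R]_N) (lam : nat -> R) (nbar : nat).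
Variables (W : R -> 'rV[R]_N -> R).
Local Notation mu := (@lebesgue_measure R).
Hypothesis He_der : forall n t (i : 'I_N), derivable (fun s => e n s 0 i) t 1.
Hypothesis He_orth : forall m n, ipL2 (e m) (e n) = (m == n)%:R.
Hypothesis Hneg : forall n, (n < nbar)%N -> lam n <= 0.
Hypothesis Hpos : 0 < lam nbar.

Definition dext (c : 'I_nbar -> R) (z : R) : nat -> R :=
  fun k => odflt z (omap c (insub k : option 'I_nbar)).

Lemma dext_ord c z (i : 'I_nbar) : dext c z i = c i.
Proof. by rewrite /dext valK. Qed.

Lemma dext_nbar c z : dext c z nbar = z.
Proof. by rewrite /dext insubN // ltnn. Qed.

Lemma comb_lincomb c z :
  (fun t => z *: e nbar t + lincomb e c t) = comb e (dext c z) nbar.+1.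
Proof.
apply: funext => t; rewrite /comb big_ord_recr /= dext_nbar addrC; congr (_ + _).
by rewrite /lincomb; apply: eq_bigr => i _; rewrite dext_ord.
Qed.

Lemma lincomb_comb c : lincomb e c = comb e (dext c 0) nbar.+1.
Proof.
rewrite -comb_lincomb; apply: funext => t; by rewrite scale0r add0r.
Qed.

Lemma sumsq_dext c z :
  \sum_(k < nbar.+1) dext c z k ^+ 2 = \sum_(k < nbar.+1) dext c 0 k ^+ 2 + z ^+ 2.
Proof.
rewrite !big_ord_recr /= !dext_nbar expr0n /= addr0; congr (_ + _).
by apply: eq_bigr => i _; rewrite !dext_ord.
Qed.

Lemma ipc d n : ipL2 (comb e d nbar.+1) (e n) = if (n < nbar.+1)%N then d n else 0.
Proof. exact: (ip_comb He_der He_orth d nbar.+1 n).2. Qed.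

Lemma Ifun_bound d :
  Ifun lam e W (comb e d nbar.+1) <=
  2^-1 * (lam nbar * d nbar ^+ 2) - Rintegral mu setT (fun t => W t (comb e d nbar.+1 t)).
Proof.
rewrite /Ifun.
have HP : limn (fun k => \sum_(n < k | 0 < lam n) lam n * (ipL2 (comb e d nbar.+1) (e n)) ^+ 2)
          = lam nbar * d nbar ^+ 2.
  apply: (lim_evc (K0 := nbar.+1)) => k Hk /=.
  rewrite (@sum_trunc _ (fun n => lam n * ipL2 (comb e d nbar.+1) (e n) ^+ 2) (fun n => 0 < lam n) nbar.+1 k) //; last first.
    by move=> n Hn; rewrite ipc ltnNge Hn /= expr0n /= mulr0.
  rewrite big_mkcond big_ord_recr /= Hpos ipc ltnSn big1 ?add0r //.
  by move=> i _; rewrite ltNge Hneg.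
rewrite HP.
set Q := limn _.
have HQ : 0 <= Q.
  rewrite /Q; set g := (fun k => _).
  rewrite (@lim_evc _ g (\sum_(n < nbar.+1 | lam n < 0) `|lam n| * (ipL2 (comb e d nbar.+1) (e n)) ^+ 2) nbar.+1).
    by apply: sumr_ge0 => n _; apply: mulr_ge0; [exact: normr_ge0 | exact: sqr_ge0].
  move=> k Hk; rewrite /g (@sum_trunc _ (fun n => `|lam n| * ipL2 (comb e d nbar.+1) (e n) ^+ 2) (fun n => lam n < 0) nbar.+1 k) //.
  by move=> n Hn; rewrite ipc ltnNge Hn /= expr0n /= mulr0.
have : 0 <= 2^-1 * Q by apply: mulr_ge0 => //; rewrite invr_ge0.
lra.
Qed.

End Asm.

Section Enrm.
Variables (R : realType) (N : nat) (e : nat -> R -> 'rV[R]_N) (lam : nat -> R) (nbar : nat).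
Hypothesis He_der : forall n t (i : 'I_N), derivable (fun s => e n s 0 i) t 1.
Hypothesis He_orth : forall m n, ipL2 (e m) (e n) = (m == n)%:R.

Lemma Enorm_comb d :
  Enorm lam e (comb e d nbar.+1) ^+ 2 =
  \sum_(n < nbar.+1) (`|lam n| + (lam n == 0)%:R) * d n ^+ 2.
Proof.
have Hw : forall n, 0 <= `|lam n| + (lam n == 0)%:R :> R.
  by move=> n; apply: addr_ge0 => //; case: (lam n == 0).
rewrite /Enorm (@lim_evc _ _ (\sum_(n < nbar.+1) (`|lam n| + (lam n == 0)%:R) * d n ^+ 2) nbar.+1).
  rewrite sqr_sqrtr //; apply: sumr_ge0 => n _; apply: mulr_ge0 => //; exact: sqr_ge0.
move=> k Hk /=.
rewrite (@sum_trunc _ (fun n => (`|lam n| + (lam n == 0)%:R) *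
   ipL2 (comb e d nbar.+1) (e n) ^+ 2) (fun _ => true) nbar.+1 k) //.
  apply: eq_bigr => n _.
  by rewrite (ip_comb He_der He_orth d nbar.+1 n).2 ltn_ord.
move=> n Hn; rewrite (ip_comb He_der He_orth d nbar.+1 n).2 ltnNge Hn /=.
by rewrite expr0n /= mulr0.
Qed.

Lemma wsum_le (d : nat -> R) :
  \sum_(n < nbar.+1) (`|lam n| + (lam n == 0)%:R) * d n ^+ 2 <=
  (\sum_(n < nbar.+1) (`|lam n| + (lam n == 0)%:R)) * \sum_(n < nbar.+1) d n ^+ 2.
Proof.
have Hw : forall n, 0 <= `|lam n| + (lam n == 0)%:R :> R.
  by move=> n; apply: addr_ge0 => //; case: (lam n == 0).
rewrite mulr_sumr; apply: ler_sum => n _.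
apply: ler_wpM2r; first exact: sqr_ge0.
rewrite (bigD1 n) //= lerDl; apply: sumr_ge0 => j _; exact: Hw.
Qed.

End Enrm.
Theorem lemma2p5 (R : realType) (N : nat) (L : R -> 'M[R]_N)
  (W : R -> 'rV[R]_N -> R) (gradW : R -> 'rV[R]_N -> 'rV[R]_N)
  (lam : nat -> R) (e : nat -> R -> 'rV[R]_N) (nbar : nat) (varrho : R) :
  (0 < N)%N ->
  (* L continuous, symmetric-matrix valued *)
  (forall i j : 'I_N, continuous (fun t => L t i j)) ->
  (forall t, (L t)^T = L t) ->
  (* W in C^1(R x R^N), gradW its gradient in x *)
  continuous (fun p : R * 'rV[R]_N => W p.1 p.2) ->
  (forall i : 'I_N, continuous (fun p : R * 'rV[R]_N => gradW p.1 p.2 0 i)) ->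
  (forall t x v, is_derive x v (W t) (dotv (gradW t x) v)) ->
  (* spectral data of H *)
  eigen_basis L lam e ->
  (forall n, (n < nbar)%N -> lam n <= 0) -> 0 < lam nbar ->
  (* (L1) *)
  (exists alpha M : R, 1 < alpha /\ 0 < M /\
     (fun r : R => lebesgue_measure
        [set t : R | r <= `|t| /\ lmin L t <= M * `|t| * (ln `|t|) `^ alpha])
       @ +oo --> 0%E) ->
  (* (L2) *)
  (exists L0 : R, 0 < L0 /\ forall t x, quadf (L t) x >= - L0 * vnorm x ^+ 2) ->
  (* (W1) *)
  (exists b1 : R, 0 < b1 /\ forall t x, W t 0 = 0 /\ vnorm (gradW t x) <= b1 * vnorm x) ->
  (* (W2), (W3) with Wtilde = 2W - (gradW, x) *)
  (exists b2 b3 r1 m : R, [/\ 0 < b2, 0 < b3, 0 < r1, 1 < m &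
     forall t x,
       (r1 <= vnorm x -> 2 * W t x - dotv (gradW t x) x >= b2 * vnorm x `^ m) /\
       (vnorm x < r1 -> 2 * W t x - dotv (gradW t x) x >= - b3 * vnorm x)]) ->
  (* (W4) *)
  (exists r2 sigma0 : R, 0 < r2 /\ 0 < sigma0 /\
     forall t x, vnorm x <= r2 -> `|W t x| <= (lam nbar - sigma0) / 2 * vnorm x ^+ 2) ->
  (* (W5) *)
  (exists eps0 rinf : R, 0 < eps0 /\ 0 < rinf /\
     forall t x, rinf <= vnorm x -> W t x >= (lam nbar / 2 + eps0) * vnorm x ^+ 2) ->
  (* (W6) *)
  (forall t x, 0 <= W t x) ->
  0 < varrho ->
  exists rho : R, varrho < rho /\
    forall u, boundaryQ lam e nbar rho u -> Ifun lam e W u <= 0.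
Proof.
move=> N0 HLc HLs HWc HgWc HWd [[HL2 Horth] Hcompl Hder Hmono Hlim] Hneg Hpos HL1 HL2'
  [b1 [Hb1 HW1]] HW23 HW4 [eps0 [rinf [Heps [Hrinf HW5]]]] HW6 Hvr.
have He_der : forall n t (i : 'I_N), derivable (fun s => e n s 0 i) t 1.
  by move=> n t i; have [] := Hder n t i.
have [K [K0 HK]] := @key_exists R N e W gradW b1 (lam nbar) eps0 rinf nbar.+1
  He_der Horth HWc HWd Hb1 HW1 HW6 Hpos Heps Hrinf HW5.
set Wt := \sum_(n < nbar.+1) (`|lam n| + (lam n == 0)%:R).
have Wt0 : 0 <= Wt.
  by apply: sumr_ge0 => n _; apply: addr_ge0 => //; case: (lam n == 0).
set Wm := 1 + Wt.
have Wm1 : 1 <= Wm by rewrite /Wm lerDl.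
have WmK : K <= Wm * K by rewrite ler_peMl // ltW.
set rho := varrho + 1 + Wm * K.
have WmK0 : 0 <= Wm * K by apply: mulr_ge0; [lra | exact: ltW].
have rho1 : 1 <= rho by rewrite /rho; lra.
have rhoWK : Wm * K <= rho ^+ 2.
  apply: (@le_trans _ _ rho); first by rewrite /rho; lra.
  by rewrite expr2 ler_peMl //; lra.
exists rho; split; first by rewrite /rho; lra.
have Hlam := Hpos.
have gen : forall (c : 'I_nbar -> R) z,
   K <= \sum_(k < nbar.+1) dext c z k ^+ 2 ->
   Ifun lam e W (comb e (dext c z) nbar.+1) <= 0.
  move=> c z HD.
  apply: le_trans (Ifun_bound W He_der Horth Hneg Hpos (dext c z)) _.
  have := HK _ HD; rewrite dext_nbar.
  set D := \sum_(k < nbar.+1) _.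
  have HzD : z ^+ 2 <= D.
    by rewrite /D sumsq_dext lerDr; apply: sumr_ge0 => k _; exact: sqr_ge0.
  move=> HI.
  have : lam nbar * z ^+ 2 <= lam nbar * D by apply: ler_wpM2l => //; exact: ltW.
  move: HI; set J := Rintegral _ _ _ => HI H2.
  have HJ : forall J', lam nbar / 2 * D <= J' -> 2^-1 * (lam nbar * z ^+ 2) - J' <= 0.
    move=> J' HJ'; lra.
  exact: HJ.
move=> u [[Hu|Hu]|Hu].
- case: Hu => c [-> _].
  rewrite (lincomb_comb e) .
  apply: le_trans (Ifun_bound W He_der Horth Hneg Hpos (dext c 0)) _.
  rewrite dext_nbar expr0n /= mulr0 mulr0 sub0r oppr_le0.
  by apply: Rintegral_ge0 => t _; exact: HW6.
- case: Hu => v [[c [-> _]] ->].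
  rewrite (comb_lincomb e); apply: gen.
  rewrite sumsq_dext.
  have : 0 <= \sum_(k < nbar.+1) dext c 0 k ^+ 2 by apply: sumr_ge0 => k _; exact: sqr_ge0.
  have : rho <= rho ^+ 2 by rewrite expr2 ler_peMl //; lra.
  lra.
- case: Hu => z [v [Hz [[c [-> Hc]] ->]]].
  rewrite (comb_lincomb e); apply: gen.
  rewrite sumsq_dext.
  have HE := Enorm_comb lam nbar He_der Horth (dext c 0).
  rewrite -(lincomb_comb e) Hc in HE.
  have HB := wsum_le lam nbar (dext c 0).
  rewrite -HE -/Wt in HB.
  set D0 := \sum_(k < nbar.+1) dext c 0 k ^+ 2 in HB *.
  have D00 : 0 <= D0 by apply: sumr_ge0 => k _; exact: sqr_ge0.
  have : Wm * K <= Wm * D0.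
    apply: (le_trans rhoWK); apply: (le_trans HB).
    by rewrite /Wm mulrDl mul1r lerDr.
  rewrite ler_pM2l; last lra.
  have := sqr_ge0 z; lra.
Qed.
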